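(* Let $q\geq 3$, $n\ge 2$, let $A$ be an $n\times n$ hermitian matrix over $\mathbb{F}_{q^2}$ of rank $n-1$, and let $\mathcal{L}_1\neq\mathcal{L}_2$ be two leaves of $A$. For $i=1,2$ let $N_i$ be the hermitian matrix of rank $n-1$ of which $\mathcal{L}_i^{-1}=\{X^{-1}:X\in\mathcal{L}_i\}$ is a leaf. Then there exist an invertible matrix $Q$ and column vectors $\mathbf{z}_1\neq\mathbf{z}_2$ in $\mathbb{F}_{q^2}^{n-1}$ such that $$N_i=Q\begin{bmatrix}I_{n-1}&\mathbf{z}_i\\ \mathbf{z}_i^\ast&\mathbf{z}_i^\ast\mathbf{z}_i\end{bmatrix}Q^\ast\qquad(i=1,2),$$ and consequently $\operatorname{rank}(N_1-N_2)=2$.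
   Context: $\mathbb{F}_{q^2}$ is the field with $q^2$ elements with involution $\bar x=x^q$, fixed field $\mathbb{F}_q$; $X^\ast=\bar X^\top$; hermitian means $A^\ast=A$. Leaf: if $A$ is an $n\times n$ hermitian matrix of rank $s<n$ and $\mathbf{x}$ is not in the column space of $A$, then $\{A+\lambda\mathbf{x}\mathbf{x}^\ast: 0\ne\lambda\in\mathbb{F}_q\}$ is a leaf of $A$. For a leaf $\mathcal{L}$ of a rank-$(n-1)$ matrix (whose elements are invertible), $\mathcal{L}^{-1}$ is a leaf of a unique hermitian matrix of rank $n-1$. *)

(* Defs.v *)
From HB Require Import structures.
From mathcomp Require Import all_boot all_order all_algebra.
Set Implicit Arguments. Unset Strict Implicit. Unset Printing Implicit Defensive.
Import GRing.Theory.
Local Open Scope ring_scope.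

(* F plays the role of F_{q^2} (hypothesis #|F| = q^2 in the theorem);
   the involution is x |-> x^q, with fixed field F_q = {x | x^q = x}. *)
Definition hconj (F : finFieldType) (q : nat) (x : F) : F := x ^+ q.

Definition adjmx (F : finFieldType) (q : nat) (m n : nat) (X : 'M[F]_(m, n))
  : 'M[F]_(n, m) := (map_mx (hconj q) X)^T.

Definition is_herm (F : finFieldType) (q : nat) (n : nat) (A : 'M[F]_n) : Prop :=
  adjmx q A = A.

Definition Fq_nonzero (F : finFieldType) (q : nat) : pred F :=
  [pred l : F | (l ^+ q == l) && (l != 0)].

Definition leaf (F : finFieldType) (q : nat) (n : nat) (A : 'M[F]_n)
  (L : {set 'M[F]_n}) : Prop :=
  is_herm q A /\ (\rank A < n)%N /\
  exists x : 'cV[F]_n, ~~ (x^T <= A^T)%MS /\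
    L = [set A + lambda *: (x *m adjmx q x) | lambda in Fq_nonzero q].

Definition inv_set (F : finFieldType) (n : nat) (L : {set 'M[F]_n}) : {set 'M[F]_n} :=
  [set invmx X | X in L].

Definition zblock (F : finFieldType) (q : nat) (m : nat) (z : 'cV[F]_m) : 'M[F]_(m + 1) :=
  block_mx (1%:M : 'M[F]_m) z (adjmx q z) (adjmx q z *m z).

(* Main.v *)
Require Import Defs.
From HB Require Import structures.
From mathcomp Require Import all_boot all_order all_algebra all_solvable all_field.
From mathcomp Require Import zify.
Import GRing.Theory.
Local Open Scope ring_scope.

Section Herm.
Variables (F : finFieldType) (q : nat).
Hypothesis hq : (3 <= q)%N.
Hypothesis hF : #|F| = (q ^ 2)%N.

Local Notation cj := (@hconj F q).

Lemma q_gt0 : (0 < q)%N. Proof. exact: leq_trans hq. Qed.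

Lemma cjK (x : F) : cj (cj x) = x.
Proof. by rewrite /hconj -exprM mulnn -hF expf_card. Qed.

Lemma q_pchar : [pchar F].-nat q.
Proof.
have [p pr_p chp] := finPcharP F.
have : pgroup p [set: F] by apply: abelem_pgroup; apply: fin_ring_pchar_abelem.
rewrite /pgroup cardsT hF pnatX orbF => pq.
by rewrite (eq_pnat _ (pcharf_eq chp)).
Qed.

Lemma cjD (x y : F) : cj (x + y) = cj x + cj y.
Proof. by rewrite /hconj exprDn_pchar ?q_pchar. Qed.

Lemma cj0 : cj 0 = 0.
Proof. by rewrite /hconj expr0n eqn0Ngt q_gt0. Qed.

Lemma cjB (x y : F) : cj (x - y) = cj x - cj y.
Proof.
have : cj (- y) + cj y = 0 by rewrite -cjD addNr cj0.
by move/eqP; rewrite addr_eq0 => /eqP e; rewrite cjD e.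
Qed.

Lemma cjMM : monoid_morphism cj.
Proof. by split; [rewrite /hconj expr1n | move=> x y; rewrite /hconj exprMn]. Qed.

HB.instance Definition _ := GRing.isZmodMorphism.Build F F cj cjB.
HB.instance Definition _ := GRing.isMonoidMorphism.Build F F cj cjMM.

Lemma cjE x : cj x = x ^+ q. Proof. by []. Qed.


Lemma cardF_gt1 : (1 < #|F|)%N.
Proof. rewrite hF -mulnn; have := hq; nia. Qed.

Lemma eN : (#|F|.-1 = q.+1 * q.-1)%N.
Proof.
rewrite hF; case: q hq => // k _.
rewrite -mulnn /=; nia.
Qed.

Lemma unity_card {x : F} : x != 0 -> x ^+ #|F|.-1 = 1.
Proof.
move=> x0; apply: (mulfI x0); rewrite mulr1 -exprS prednK ?expf_card //.
exact: ltn_trans cardF_gt1.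
Qed.

Lemma exists_prim : exists w : F, (#|F|.-1).-primitive_root w.
Proof.
have : has (#|F|.-1).-primitive_root (enum (predC1 (0:F))).
  apply: has_prim_root.
- by rewrite -ltnS prednK ?cardF_gt1 // ltnW // cardF_gt1.
- apply/allP=> x; rewrite mem_enum /= => x0.
  by rewrite unity_rootE unity_card.
- exact: enum_uniq.
- by rewrite -cardE cardC1.
by case/hasP => w _ pw; exists w.
Qed.

Lemma qm1_gt0 : (0 < q.-1)%N.
Proof. by case: q hq => [|[|k]]. Qed.

Lemma norm_surj l : l ^+ q = l -> l != 0 -> exists c, c * cj c = l.
Proof.
move=> lq l0; have [w pw] := exists_prim.
have [[i _] /= ei] := prim_rootP pw (unity_card l0).
move: lq; rewrite ei -exprM => /eqP; rewrite (eq_prim_root_expr pw).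
rewrite eqn_mod_dvd ?leq_pmulr ?q_gt0 // -{2}(muln1 i) -mulnBr subn1 eN.
rewrite dvdn_pmul2r ?qm1_gt0 // => /dvdnP [k ek].
exists (w ^+ k); rewrite /hconj -exprM -exprD ek -mulnS mulnC //.
Qed.

Lemma Fq_other : exists l : F, [/\ l ^+ q = l, l != 0 & l != 1].
Proof.
have [w pw] := exists_prim.
have w0 : w != 0.
  by apply/eqP => w0; move: (prim_expr_order pw); rewrite w0 expr0n; case: (#|F|.-1) (prim_order_gt0 pw) => // ? _ /eqP; rewrite eq_sym oner_eq0.
exists (w ^+ q.+1); split.
- apply/eqP; rewrite -exprM (eq_prim_root_expr pw).
  rewrite eqn_mod_dvd ?leq_pmulr ?q_gt0 // -{2}(muln1 q.+1) -mulnBr subn1 eN.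
  by rewrite dvdnn.
- by rewrite expf_neq0.
- rewrite -(expr0 w) (eq_prim_root_expr pw) mod0n modn_small //.
  rewrite eN; have := hq; nia.
Qed.

Lemma trace_nz : exists t : F, t + cj t != 0.
Proof.
have [w pw] := exists_prim.
exists w; apply/negP; rewrite addr_eq0 => /eqP e.
have : (w ^+ q) ^+ 2 = w ^+ 2 by rewrite {2}e sqrrN.
rewrite -exprM => /eqP; rewrite (eq_prim_root_expr pw) eqn_mod_dvd; last by have := hq; nia.
move=> /dvdn_leq; rewrite eN; have := hq => hq3 H.
have : (0 < q * 2 - 2)%N by nia.
move=> /H; nia.
Qed.

Local Notation adj := (@adjmx F q _ _).

Lemma adjE m n (X : 'M[F]_(m, n)) i j : adj X i j = cj (X j i).
Proof. by rewrite !mxE. Qed.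

Lemma adjK m n (X : 'M[F]_(m, n)) : adj (adj X) = X.
Proof. by apply/matrixP => i j; rewrite !adjE cjK. Qed.

Lemma adjM m n p (X : 'M[F]_(m, n)) (Y : 'M[F]_(n, p)) : adj (X *m Y) = adj Y *m adj X.
Proof. by rewrite /adjmx map_mxM trmx_mul. Qed.

Lemma adjD m n (X Y : 'M[F]_(m, n)) : adj (X + Y) = adj X + adj Y.
Proof. by apply/matrixP => i j; rewrite !mxE rmorphD. Qed.

Lemma adjN m n (X : 'M[F]_(m, n)) : adj (- X) = - adj X.
Proof. by apply/matrixP => i j; rewrite !mxE rmorphN. Qed.

Lemma adjB m n (X Y : 'M[F]_(m, n)) : adj (X - Y) = adj X - adj Y.
Proof. by rewrite adjD adjN. Qed.

Lemma adjZ m n a (X : 'M[F]_(m, n)) : adj (a *: X) = cj a *: adj X.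
Proof. by apply/matrixP => i j; rewrite !mxE rmorphM. Qed.

Lemma adj0 m n : adj (0 : 'M[F]_(m, n)) = 0.
Proof. by apply/matrixP => i j; rewrite !mxE rmorph0. Qed.

Lemma adj_scalar n a : adj (a%:M : 'M[F]_n) = (cj a)%:M.
Proof. by rewrite /adjmx map_scalar_mx tr_scalar_mx. Qed.

Lemma adj1 n : adj (1%:M : 'M[F]_n) = 1%:M.
Proof. by rewrite adj_scalar rmorph1. Qed.

Lemma adj_block m1 m2 n1 n2 (a : 'M[F]_(m1, n1)) (b : 'M[F]_(m1, n2))
  (c : 'M[F]_(m2, n1)) (d : 'M[F]_(m2, n2)) :
  adj (block_mx a b c d) = block_mx (adj a) (adj c) (adj b) (adj d).
Proof. by rewrite /adjmx map_block_mx tr_block_mx. Qed.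

Lemma adj_col m1 m2 n (a : 'M[F]_(m1, n)) (b : 'M[F]_(m2, n)) :
  adj (col_mx a b) = row_mx (adj a) (adj b).
Proof. by rewrite /adjmx map_col_mx tr_col_mx. Qed.

Lemma adj_row m n1 n2 (a : 'M[F]_(m, n1)) (b : 'M[F]_(m, n2)) :
  adj (row_mx a b) = col_mx (adj a) (adj b).
Proof. by rewrite /adjmx map_row_mx tr_row_mx. Qed.

Lemma adj_unit n (P : 'M[F]_n) : P \in unitmx -> adj P \in unitmx.
Proof. by move=> uP; rewrite /adjmx unitmx_tr map_unitmx. Qed.

Lemma adj_inv n (P : 'M[F]_n) : adj (invmx P) = invmx (adj P).
Proof. by rewrite /adjmx map_invmx trmx_inv. Qed.

Lemma rank_unitl m n (U : 'M[F]_m) (X : 'M[F]_(m, n)) : U \in unitmx -> \rank (U *m X) = \rank X.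
Proof.
move=> uU; apply/eqP; rewrite eqn_leq mxrankM_maxr /=.
by rewrite -{1}(mulKmx uU X) mxrankM_maxr.
Qed.

Lemma rank_unitr m n (U : 'M[F]_n) (X : 'M[F]_(m, n)) : U \in unitmx -> \rank (X *m U) = \rank X.
Proof. by move=> uU; rewrite mxrankMfree // row_free_unit. Qed.


Lemma adj_delta n (j : 'I_n) : adj (delta_mx 0 j : 'rV[F]_n) = delta_mx j 0.
Proof. by apply/matrixP => a b; rewrite !mxE rmorph_nat andbC. Qed.

Lemma eAe n (A : 'M[F]_n) (i j : 'I_n) :
  (delta_mx 0 i : 'rV[F]_n) *m A *m adj (delta_mx 0 j : 'rV[F]_n) = (A i j)%:M.
Proof.
rewrite adj_delta -rowE -colE; apply/matrixP => a b.
by rewrite !mxE !ord1 eqxx mulr1n.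
Qed.

Lemma sc00 (a : F) : (a%:M : 'M[F]_1) 0 0 = a.
Proof. by rewrite mxE eqxx mulr1n. Qed.

Lemma herm_entry n (A : 'M[F]_n) i j : adj A = A -> A i j = cj (A j i).
Proof. by move=> hA; rewrite -{1}hA adjE. Qed.

Lemma aniso n (A : 'M[F]_n) : adj A = A -> A != 0 ->
  exists u : 'rV[F]_n, (u *m A *m adj u) 0 0 != 0.
Proof.
move=> hA /matrix0Pn [j [i Aji]].
have [Aii|Aii0] := boolP (A i i != 0).
  by exists (delta_mx 0 i); rewrite eAe sc00.
have [Ajj|Ajj0] := boolP (A j j != 0).
  by exists (delta_mx 0 j); rewrite eAe sc00.
move: Aii0 Ajj0; rewrite !negbK => /eqP Aii0 /eqP Ajj0.
have [s hs] := trace_nz.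
exists (delta_mx 0 i + (s / A j i) *: delta_mx 0 j).
rewrite adjD adjZ !mulmxDl !mulmxDr -!scalemxAl -!scalemxAr !eAe.
rewrite !mxE !eqxx !mulr1n Aii0 Ajj0 !mulr0 add0r addr0.
rewrite (herm_entry _ A i j hA) -rmorphM -mulrA mulVf // mulr1 addrC.
by []. Qed.


Lemma complete_row n (u : 'rV[F]_(1 + n)) : u != 0 ->
  exists R : 'M[F]_(1 + n), R \in unitmx /\ exists2 c, c != 0 & u = c *: usubmx R.
Proof.
move=> u0; exists (row_ebase u); split; first exact: row_ebase_unit.
have := mulmx_ebase u; rewrite rank_rV u0 /= (@pid_mx_row F n 1).
move=> eu; rewrite -mulmxA -[row_ebase u]vsubmxK mul_row_col mul0mx addr0 mul1mx in eu.
rewrite [col_ebase u]mx11_scalar mul_scalar_mx in eu.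
exists (col_ebase u 0 0); last by rewrite -{1}eu.
by have := col_ebase_unit u; rewrite unitmxE det_mx11 unitfE.
Qed.


Lemma pid_block n r :
  block_mx (1%:M : 'M[F]_1) 0 0 (pid_mx r : 'M[F]_n) = pid_mx r.+1 :> 'M[F]_(1 + n).
Proof.
apply/matrixP => i j.
case: (split_ordP i) => i' ->; case: (split_ordP j) => j' ->;
  rewrite ?block_mxEul ?block_mxEur ?block_mxEdl ?block_mxEdr !mxE /=.
- by rewrite (ord1 i') (ord1 j').
- by rewrite (ord1 i').
- by rewrite (ord1 j') add1n.
- by [].
Qed.


Lemma herm_mul m n (X : 'M[F]_(m, n)) (A : 'M[F]_n) : adj A = A ->
  adj (X *m A *m adj X) = X *m A *m adj X.
Proof. by move=> hA; rewrite !adjM adjK hA mulmxA. Qed.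

Lemma classify_step n (A : 'M[F]_(1 + n)) :
  (forall B : 'M[F]_n, adj B = B ->
     exists P, P \in unitmx /\ exists2 r, (r <= n)%N & P *m B *m adj P = pid_mx r) ->
  adj A = A ->
  exists P, P \in unitmx /\ exists2 r, (r <= 1 + n)%N & P *m A *m adj P = pid_mx r.
Proof.
move=> IH hA.
have [->|A0] := eqVneq A 0.
  exists 1%:M; split; first exact: unitmx1.
  by exists 0%N => //; rewrite mulmx0 mul0mx pid_mx_0.
have [u hu] := aniso _ _ hA A0.
have u0 : u != 0 by apply: contraNneq hu => ->; rewrite !mul0mx mxE.
have [R [uR [c c0 eu]]] := complete_row _ _ u0.
set U := usubmx R.
have hU : (U *m A *m adj U) 0 0 != 0.
  move: hu; rewrite eu adjZ -!scalemxAl -scalemxAr !mxE.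
  by apply: contra => /eqP ->; rewrite !mulr0.
set d := (U *m A *m adj U) 0 0 in hU.
have dq : d ^+ q = d.
  by rewrite /d {2}(herm_entry _ _ 0 0 (herm_mul _ _ U _ hA)).
have [e he] := norm_surj _ dq hU.
have e0 : e != 0 by apply: contraNneq hU => e0; rewrite -he e0 mul0r.
have ce0 : cj e != 0 by rewrite fmorph_eq0.
set s := e^-1.
set X1 := s *: U; set X2 := dsubmx R.
set P1 := block_mx (s%:M : 'M_1) 0 0 (1%:M : 'M_n) *m R.
have eP1 : P1 = col_mx X1 X2.
  by rewrite /P1 -{1}[R]vsubmxK mul_block_col !mul0mx addr0 add0r mul1mx mul_scalar_mx.
have uP1 : P1 \in unitmx.
  by rewrite unitmx_mul uR andbT unitmxE det_ublock det_scalar1 det1 mulr1 unitfE invr_eq0.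
have M11 : X1 *m A *m adj X1 = 1%:M.
  rewrite /X1 adjZ -!scalemxAl -scalemxAr scalerA [U *m A *m adj U]mx11_scalar -/d -he.
  rewrite scale_scalar_mx /s fmorphV; congr (_%:M).
  by rewrite mulrACA !mulVf // mulr1.
set b := X1 *m A *m adj X2; set C := X2 *m A *m adj X2.
have M21 : X2 *m A *m adj X1 = adj b by rewrite /b !adjM adjK hA mulmxA.
have eM : P1 *m A *m adj P1 = block_mx 1%:M b (adj b) C.
  by rewrite eP1 adj_col mul_col_mx mul_col_row M11 M21.
set E := block_mx (1%:M : 'M_1) 0 (- adj b) (1%:M : 'M_n).
have uE : E \in unitmx by rewrite unitmxE det_lblock !det1 mulr1 unitr1.
set C' := C - adj b *m b.
have eEM : E *m (block_mx 1%:M b (adj b) C) *m adj E = block_mx 1%:M 0 0 C'.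
  rewrite /E adj_block adjN adjK !adj1 adj0 !mulmx_block.
  rewrite !mul1mx !mulmx1 !mul0mx !mulmx0 !addr0 !addNr mul0mx add0r mulmxN mul1mx addNr.
  by rewrite /C' addrC mulNmx.
have hC' : adj C' = C'.
  by rewrite /C' adjB adjM adjK herm_mul.
have [P2 [uP2 [r hr eP2]]] := IH _ hC'.
exists (block_mx 1%:M 0 0 P2 *m E *m P1); split.
  by rewrite !unitmx_mul uE uR /= !andbT !unitmxE !det_ublock !det1 mul1r mulr1 det_scalar1 -unitmxE uP2 /= unitfE invr_eq0.
exists r.+1; first by [].
have -> : block_mx 1%:M 0 0 P2 *m E *m P1 *m A *m adj (block_mx 1%:M 0 0 P2 *m E *m P1)
   = block_mx 1%:M 0 0 P2 *m (E *m (P1 *m A *m adj P1) *m adj E) *m adj (block_mx 1%:M 0 0 P2).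
  by rewrite !adjM !mulmxA.
rewrite eM eEM adj_block adj0 adj1 !mulmx_block.
rewrite !mul1mx !mulmx1 !mul0mx !mulmx0 !addr0 !add0r eP2.
by rewrite !adj0 !mul0mx !mulmx0 addr0 pid_block. Qed.


Lemma classify n (A : 'M[F]_n) : adj A = A ->
  exists P, P \in unitmx /\ P *m A *m adj P = pid_mx (\rank A).
Proof.
suff H : forall n (A : 'M[F]_n), adj A = A ->
    exists P, P \in unitmx /\ exists2 r, (r <= n)%N & P *m A *m adj P = pid_mx r.
  move=> hA; have [P [uP [r hr eP]]] := H n A hA; exists P; split => //.
  have : \rank (P *m A *m adj P) = r by rewrite eP rank_pid_mx.
  by rewrite rank_unitr ?adj_unit // rank_unitl // => ->.
elim => [|k IH] B hB.
  exists 1%:M; split; first exact: unitmx1.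
  by exists 0%N => //; apply/matrixP => [[]].
exact: classify_step.
Qed.


Lemma inv_uniq n (X Y : 'M[F]_n) : X *m Y = 1%:M -> invmx X = Y.
Proof.
move=> XY; have [uX _] := mulmx1_unit XY.
by rewrite -[invmx X]mulmx1 -XY mulmxA mulVmx // mul1mx.
Qed.

Definition Ed m (t : F) : 'M[F]_(m + 1) := block_mx 1%:M 0 0 t%:M.

Lemma Ed_unit m t : t != 0 -> Ed m t \in unitmx.
Proof. by move=> t0; rewrite unitmxE det_ublock det1 det_scalar1 mul1r unitfE. Qed.

Lemma Ed_sub m t1 t2 : Ed m t1 - Ed m t2 = block_mx 0 0 0 (t1 - t2)%:M.
Proof. by rewrite /Ed opp_block_mx add_block_mx !subrr raddfB. Qed.

Lemma N_det m (G N : 'M[F]_(m + 1)) (y : 'cV[F]_(m + 1)) t1 t2 mu1 mu2 :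
  G \in unitmx -> \rank N = m -> t1 != t2 ->
  G *m Ed m t1 *m adj G = N + mu1 *: (y *m adj y) ->
  G *m Ed m t2 *m adj G = N + mu2 *: (y *m adj y) ->
  N = G *m pid_mx m *m adj G.
Proof.
move=> uG rN t12 e1 e2.
set Gi := invmx G.
have uGi : Gi \in unitmx by rewrite unitmx_inv.
have GGi : G *m Gi = 1%:M by rewrite mulmxV.
have aGGi : adj G *m adj Gi = 1%:M by rewrite -adjM mulVmx // adj1.
have back : forall X, Gi *m (G *m X *m adj G) *m adj Gi = X.
  by move=> X; rewrite !mulmxA mulVmx // mul1mx -mulmxA aGGi mulmx1.
set K := Gi *m N *m adj Gi.
set Y := Gi *m (y *m adj y) *m adj Gi.
have ex : forall mu, Gi *m (N + mu *: (y *m adj y)) *m adj Gi = K + mu *: Y.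
  by move=> mu; rewrite mulmxDr mulmxDl -scalemxAr -scalemxAl.
have f1 : Ed m t1 = K + mu1 *: Y by rewrite -ex -e1 back.
have f2 : Ed m t2 = K + mu2 *: Y by rewrite -ex -e2 back.
have d12 : block_mx 0 0 0 (t1 - t2)%:M = (mu1 - mu2) *: Y.
  by rewrite -Ed_sub f1 f2 scalerBl opprD addrACA subrr add0r.
have mu12 : mu1 - mu2 != 0.
  apply: contraNneq t12 => m0; move: d12; rewrite m0 scale0r => /(congr1 drsubmx).
  by rewrite block_mxKdr => /(congr1 (fun M : 'M[F]_1 => M 0 0)); rewrite sc00 !mxE => /eqP; rewrite subr_eq0.
set tau := t1 - mu1 * ((mu1 - mu2)^-1 * (t1 - t2)).
have eY : Y = (mu1 - mu2)^-1 *: block_mx 0 0 0 (t1 - t2)%:M.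
  by rewrite d12 scalerA mulVf // scale1r.
have eK : K = Ed m tau.
  rewrite (_ : K = Ed m t1 - mu1 *: Y); last by rewrite f1 addrK.
  rewrite eY scalerA scale_block_mx !scaler0 scale_scalar_mx /Ed opp_block_mx add_block_mx !oppr0 !addr0 -raddfB /tau mulrA.
  by [].
have rK : \rank K = m by rewrite /K rank_unitr ?adj_unit // rank_unitl.
have tau0 : tau = 0.
  apply/eqP/negPn/negP => t0; move: rK.
  by rewrite eK mxrank_unit ?Ed_unit // addn1 => /esym/n_Sn.
have -> : N = G *m K *m adj G.
  rewrite /K !mulmxA GGi mul1mx -mulmxA -adjM.
  by rewrite GGi adj1 mulmx1.
by rewrite eK tau0 /Ed (@pid_mx_block F 1 1 m) raddf0.
Qed.


Lemma Tz_id m (z : 'cV[F]_m) nu :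
  pid_mx m + nu *: (col_mx (-z) 1%:M *m adj (col_mx (-z) 1%:M))
  = block_mx 1%:M (-z) 0 1%:M *m Ed m nu *m adj (block_mx 1%:M (-z) 0 1%:M).
Proof.
rewrite (@pid_mx_block F 1 1 m) /Ed adj_col adj_block adjN !adj1 adj0 mul_col_row !mulmx_block.
rewrite !mul1mx !mulmx1 !mul0mx !mulmx0 !addr0 !add0r.
by rewrite scale_block_mx add_block_mx !add0r mul_mx_scalar mul_scalar_mx -scalemxAl scalemx1.
Qed.


Lemma TzU m (z : 'cV[F]_m) :
  block_mx 1%:M (-z) 0 1%:M *m block_mx 1%:M z 0 1%:M = 1%:M :> 'M[F]_(m + 1).
Proof.
rewrite mulmx_block !mul1mx !mulmx1 !mul0mx !addr0 !add0r addrC subrr.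
by rewrite mulmx0 add0r -scalar_mx_block.
Qed.

Lemma zblock_id m (z : 'cV[F]_m) :
  adj (block_mx 1%:M z 0 1%:M) *m pid_mx m *m block_mx 1%:M z 0 1%:M = zblock q z.
Proof.
rewrite (@pid_mx_block F 1 1 m) adj_block !adj1 adj0 !mulmx_block.
by rewrite !mul1mx !mulmx1 !mul0mx !mulmx0 !addr0 mul1mx.
Qed.

Lemma Ed_inv m nu : nu != 0 -> Ed m nu *m Ed m nu^-1 = 1%:M.
Proof.
move=> nu0; rewrite /Ed mulmx_block !mul1mx !mulmx1 !mul0mx !mulmx0 !addr0 !add0r.
by rewrite -scalar_mxM mulfV // -scalar_mx_block.
Qed.


Definition Gz m (z : 'cV[F]_m) (P : 'M[F]_(m + 1)) := adj (block_mx 1%:M z 0 1%:M *m P).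
Arguments Gz {m}.

Lemma leaf_analysis m (A P : 'M[F]_(m + 1)) (x : 'cV[F]_(m + 1)) :
  P \in unitmx -> P *m A *m adj P = pid_mx m -> ~~ (x^T <= A^T)%MS ->
  exists z : 'cV[F]_m, exists beta : F, [/\ beta != 0,
    x = beta *: (invmx P *m col_mx (- z) 1%:M) &
    forall lam, lam != 0 ->
      invmx (A + lam *: (x *m adj x)) = Gz z P *m Ed m (lam * (beta * cj beta))^-1 *m adj (Gz z P)].
Proof.
move=> uP hP xA.
set R := invmx P.
have uR : R \in unitmx by rewrite unitmx_inv.
have eA : A = R *m pid_mx m *m adj R.
  rewrite -hP /R !mulmxA mulVmx // mul1mx -mulmxA -adjM mulVmx // adj1 mulmx1 //.
set u := P *m x.
have ex : x = R *m u by rewrite /u /R mulmxA mulVmx // mul1mx.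
set beta := dsubmx u 0 0.
have b0 : beta != 0.
  apply: contra xA => /eqP b0.
  have eu : u = col_mx (usubmx u) 0.
    by rewrite -[u in LHS]vsubmxK [dsubmx u]mx11_scalar -/beta b0 raddf0.
  have Du : pid_mx m *m u = u.
    by rewrite {1}eu (@pid_mx_block F 1 1 m) mul_block_col !mul1mx !mul0mx !addr0 -eu.
  have ex2 : x = A *m (invmx (adj R) *m u).
    rewrite eA !mulmxA -[R *m pid_mx m *m adj R *m invmx (adj R)]mulmxA mulmxV ?adj_unit //.
    by rewrite mulmx1 -!mulmxA -/u Du.
  by rewrite ex2 trmx_mul submxMl.
set z := - (beta^-1 *: usubmx u).
have xv : x = beta *: (R *m col_mx (- z) 1%:M).
  rewrite {1}ex scalemxAr; congr (R *m _).
  rewrite /z opprK scale_col_mx scalerA mulfV // scale1r scalemx1 -/beta.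
  by rewrite /beta -mx11_scalar vsubmxK.
exists z, beta; split => // lam lam0.
set nu := lam * (beta * cj beta).
have nu0 : nu != 0 by rewrite mulf_neq0 // mulf_neq0 // fmorph_eq0.
set Tz := block_mx 1%:M (-z) 0 1%:M.
set U := block_mx 1%:M z 0 1%:M.
have eX : A + lam *: (x *m adj x) = R *m (Tz *m Ed m nu *m adj Tz) *m adj R.
  rewrite -Tz_id mulmxDr mulmxDl -eA; congr (_ + _).
  rewrite xv adjZ adjM -scalemxAr -[beta *: _ *m _]scalemxAl -scalemxAr -[nu *: _ *m _]scalemxAl !scalerA !mulmxA.
  by rewrite /nu [beta * _]mulrC mulrA.
have UT : U *m Tz = 1%:M by apply: mulmx1C; apply: TzU.
rewrite eX; apply: inv_uniq.
rewrite /Gz adjK -/U.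
have -> : R *m (Tz *m Ed m nu *m adj Tz) *m adj R *m (adj (U *m P) *m Ed m nu^-1 *m (U *m P))
   = R *m Tz *m Ed m nu *m (adj Tz *m (adj R *m adj P) *m adj U) *m Ed m nu^-1 *m U *m P.
  by rewrite adjM !mulmxA.
rewrite -adjM mulmxV // adj1 mulmx1 -adjM UT adj1 mulmx1.
rewrite -[R *m Tz *m Ed m nu *m Ed m nu^-1]mulmxA Ed_inv // mulmx1.
by rewrite -[R *m Tz *m U]mulmxA TzU mulmx1 mulVmx.
Qed.


Lemma Gz_unit m (z : 'cV[F]_m) P : P \in unitmx -> Gz z P \in unitmx.
Proof.
move=> uP; rewrite /Gz adj_unit // unitmx_mul uP andbT.
by rewrite unitmxE det_ublock !det1 mulr1 unitr1.
Qed.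

Lemma Gz_D m (z : 'cV[F]_m) P :
  Gz z P *m pid_mx m *m adj (Gz z P) = adj P *m zblock q z *m P.
Proof. by rewrite /Gz adjK adjM -zblock_id !mulmxA. Qed.

Lemma rank_zdiff m (z1 z2 : 'cV[F]_m) : z1 != z2 -> \rank (zblock q z1 - zblock q z2) = 2%N.
Proof.
move=> z12; set d := z1 - z2; set c := adj z1 *m z1 - adj z2 *m z2.
have eM : zblock q z1 - zblock q z2 = block_mx 0 d (adj d) c.
  by rewrite /zblock opp_block_mx add_block_mx subrr adjB.
rewrite eM; apply/eqP; rewrite eqn_leq; apply/andP; split.
  have -> : block_mx 0 d (adj d) c =
     row_mx (col_mx d c) (col_mx 0 1%:M) *m col_mx (row_mx 0 1%:M) (row_mx (adj d) 0).
    rewrite mul_row_col !mul_col_row !mulmx0 !mulmx1 !mul0mx !mul1mx.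
    by rewrite add_block_mx !addr0 !add0r.
  exact: leq_trans (mxrankM_maxl _ _) (rank_leq_col _).
have [i di] : exists i, d i 0 != 0.
  have : d != 0 by rewrite subr_eq0.
  by case/matrix0Pn => i [j]; rewrite (ord1 j) => ?; exists i.
set Rr := row_mx (col_mx (0 : 'cV[F]_m) 1%:M) (col_mx (delta_mx i 0) (0 : 'M[F]_1)).
set Ll := block_mx (delta_mx 0 i : 'rV[F]_m) 0 0 (1%:M : 'M[F]_1).
have eS : Ll *m (block_mx 0 d (adj d) c *m Rr) =
    block_mx (delta_mx 0 i *m d) 0 c (adj d *m delta_mx i 0) :> 'M[F]_(1 + 1).
  by rewrite /Rr /Ll mul_mx_row !mul_block_col !mul0mx !mulmx0 !mulmx1 !add0r !addr0 mul_mx_row !mul_block_col block_mxEh !mul0mx !mulmx0 !mul1mx !addr0 !add0r.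
have u2 : block_mx (delta_mx 0 i *m d) 0 c (adj d *m delta_mx i 0) \in unitmx.
  rewrite unitmxE det_lblock !det_mx11 unitfE mulf_neq0 //.
    by rewrite -rowE mxE.
  by rewrite -colE mxE adjE fmorph_eq0.
have := mxrank_unit u2; rewrite -eS => r2.
rewrite -[X in (X < _)%N]/(1%N) -[X in (X <= _)%N]/((1 + 1)%N) -{1}r2.
exact: leq_trans (mxrankM_maxr _ _) (mxrankM_maxl _ _).
Qed.


Lemma FqE (a : F) : (a \in Fq_nonzero q) = (a ^+ q == a) && (a != 0).
Proof. by []. Qed.

Lemma Fq_mul (a b : F) : a \in Fq_nonzero q -> b \in Fq_nonzero q -> a * b \in Fq_nonzero q.
Proof.
rewrite !FqE => /andP [/eqP ha a0] /andP [/eqP hb b0].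
by rewrite exprMn ha hb eqxx mulf_neq0.
Qed.

Lemma Fq_inv (a : F) : a \in Fq_nonzero q -> a^-1 \in Fq_nonzero q.
Proof.
rewrite !FqE => /andP [/eqP ha a0].
by rewrite exprVn ha eqxx invr_eq0.
Qed.

Lemma Fq_norm (b : F) : b != 0 -> b * cj b \in Fq_nonzero q.
Proof.
move=> b0; rewrite FqE mulf_neq0 ?fmorph_eq0 // andbT.
by rewrite /hconj exprMn -exprM mulnn -hF expf_card mulrC. Qed.

Lemma leaf_sub n (A M : 'M[F]_n) (n1 n2 : F) :
  n1 \in Fq_nonzero q -> n2 \in Fq_nonzero q ->
  [set A + (lam * n1) *: M | lam in Fq_nonzero q] \subset
  [set A + (lam * n2) *: M | lam in Fq_nonzero q].
Proof.
move=> h1 h2; apply/subsetP => X /imsetP [lam hl ->].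
apply/imsetP; exists (lam * n1 / n2).
  by rewrite Fq_mul ?Fq_inv // Fq_mul.
have n20 : n2 != 0 by move: h2; rewrite FqE => /andP [].
by rewrite divfK.
Qed.

Lemma leaf_N m (A P N : 'M[F]_(m + 1)) (L : {set 'M[F]_(m + 1)}) (x : 'cV[F]_(m + 1)) (z : 'cV[F]_m) (beta : F) :
  P \in unitmx -> beta != 0 ->
  (forall lam, lam != 0 -> invmx (A + lam *: (x *m adj x)) =
     Gz z P *m Ed m (lam * (beta * cj beta))^-1 *m adj (Gz z P)) ->
  L = [set A + lam *: (x *m adj x) | lam in Fq_nonzero q] ->
  \rank N = m -> leaf q N (inv_set L) ->
  N = adj P *m zblock q z *m P.
Proof.
move=> uP b0 hinv eL rN [_ [_ [y [_ eS]]]].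
have [l [lq l0 l1]] := Fq_other.
have nb0 : beta * cj beta != 0 by rewrite mulf_neq0 ?fmorph_eq0.
have get : forall lam, lam \in Fq_nonzero q -> exists2 mu, mu \in Fq_nonzero q &
    Gz z P *m Ed m (lam * (beta * cj beta))^-1 *m adj (Gz z P) = N + mu *: (y *m adj y).
  move=> lam hl; have lam0 : lam != 0 by move: hl; rewrite FqE => /andP [].
  have : invmx (A + lam *: (x *m adj x)) \in inv_set L.
    by apply: imset_f; rewrite eL; apply: imset_f.
  rewrite eS => /imsetP [mu hmu e]; exists mu => //.
  by rewrite -hinv.
have h1 : (1 : F) \in Fq_nonzero q by rewrite FqE expr1n eqxx oner_neq0.
have hl : l \in Fq_nonzero q by rewrite FqE lq eqxx l0.
have [mu1 _ e1] := get 1 h1.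
have [mu2 _ e2] := get l hl.
rewrite -Gz_D; eapply N_det; [exact: Gz_unit| exact: rN | | exact: e1 | exact: e2].
rewrite mul1r; apply: contra l1 => /eqP /invr_inj e.
by apply/eqP; apply: (mulIf nb0); rewrite mul1r -e.
Qed.


Lemma main_thm m (hm : (1 <= m)%N)
  (A : 'M[F]_(m + 1)) (hA : is_herm q A) (rA : \rank A = m)
  (L1 L2 : {set 'M[F]_(m + 1)})
  (hL1 : leaf q A L1) (hL2 : leaf q A L2) (hL12 : L1 != L2)
  (N1 N2 : 'M[F]_(m + 1))
  (hN1 : is_herm q N1) (rN1 : \rank N1 = m) (lN1 : leaf q N1 (inv_set L1))
  (hN2 : is_herm q N2) (rN2 : \rank N2 = m) (lN2 : leaf q N2 (inv_set L2)) :
  exists Q : 'M[F]_(m + 1), Q \in unitmx /\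
    exists z1 z2 : 'cV[F]_m, z1 != z2 /\
      N1 = Q *m zblock q z1 *m adjmx q Q /\
      N2 = Q *m zblock q z2 *m adjmx q Q /\
      \rank (N1 - N2) = 2%N.
Proof.
have [P [uP hP]] := classify _ A hA; rewrite rA in hP.
case: (hL1) => _ [_ [x1 [xA1 eL1]]]; case: (hL2) => _ [_ [x2 [xA2 eL2]]].
have [z1 [b1 [b10 xv1 hinv1]]] := leaf_analysis _ _ _ _ uP hP xA1.
have [z2 [b2 [b20 xv2 hinv2]]] := leaf_analysis _ _ _ _ uP hP xA2.
have eN1 := leaf_N _ _ _ _ _ _ _ _ uP b10 hinv1 eL1 rN1 lN1.
have eN2 := leaf_N _ _ _ _ _ _ _ _ uP b20 hinv2 eL2 rN2 lN2.
exists (adj P); split; first exact: adj_unit.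
exists z1, z2.
have z12 : z1 != z2.
  apply: contra hL12 => /eqP ez; rewrite ez in xv1.
  set X := invmx P *m col_mx (- z2) 1%:M in xv1 xv2.
  have ex : forall (b : F) x, x = b *: X ->
      (fun lam => A + lam *: (x *m adj x)) =1 (fun lam => A + (lam * (b * cj b)) *: (X *m adj X)).
    move=> b x -> lam /=; rewrite adjZ -scalemxAr -[b *: _ *m _]scalemxAl !scalerA.
    by rewrite -mulrA [cj b * b]mulrC.
  rewrite eL1 eL2 (eq_imset _ (ex _ _ xv1)) (eq_imset _ (ex _ _ xv2)).
  by rewrite eqEsubset !leaf_sub ?Fq_norm.
rewrite eN1 eN2 adjK; split => //; split => //; split => //.
rewrite -mulmxBl -mulmxBr rank_unitr // rank_unitl ?adj_unit //.
exact: rank_zdiff.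
Qed.

End Herm.

Theorem corollary3p2 (F : finFieldType) (q m : nat)
  (hq : (3 <= q)%N) (hF : #|F| = (q ^ 2)%N) (hm : (1 <= m)%N)
  (A : 'M[F]_(m + 1)) (hA : is_herm q A) (rA : \rank A = m)
  (L1 L2 : {set 'M[F]_(m + 1)})
  (hL1 : leaf q A L1) (hL2 : leaf q A L2) (hL12 : L1 != L2)
  (N1 N2 : 'M[F]_(m + 1))
  (hN1 : is_herm q N1) (rN1 : \rank N1 = m) (lN1 : leaf q N1 (inv_set L1))
  (hN2 : is_herm q N2) (rN2 : \rank N2 = m) (lN2 : leaf q N2 (inv_set L2)) :
  exists Q : 'M[F]_(m + 1), Q \in unitmx /\
    exists z1 z2 : 'cV[F]_m, z1 != z2 /\
      N1 = Q *m zblock q z1 *m adjmx q Q /\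
      N2 = Q *m zblock q z2 *m adjmx q Q /\
      \rank (N1 - N2) = 2%N.
Proof. exact: (@main_thm F q hq hF m hm A hA rA L1 L2 hL1 hL2 hL12 N1 N2 hN1 rN1 lN1 hN2 rN2 lN2). Qed.
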